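(* For each $n\geq1$, the chromatic polynomial of $\Sigma_n$ is $\chi(\Sigma_n,\lambda)=(-1)^{3^n-1}\lambda P_n(\lambda)$, where $P_n=P_{2,n}+3P_{1,n}+P_{0,n}$ and $P_{i,n}(\lambda)=H_{i,n}(1-\lambda,0)$ for $i=0,1,2$.
   Context: Graphs are finite. For a graph $G$, a spanning subgraph $A$ has vertex set $V(G)$ and edge set $E(A)\subseteq E(G)$; $k(A)$ is its number of components, $r(A)=|V(G)|-k(A)$, $n(A)=|E(A)|-r(A)$; the weight of $A$ is $(x-1)^{r(G)-r(A)}(y-1)^{n(A)}$. The graphs $\Sigma_n$ ($n\ge1$; Schreier graphs of the Hanoi Towers group $H^{(3)}$ with loops removed) each have three outmost vertices top, left, right: $\Sigma_1$ is the triangle $K_3$; $\Sigma_{n+1}$ is the disjoint union of three copies $G_1,G_2,G_3$ of $\Sigma_n$ together with three new edges joining left$(G_1)$ to top$(G_2)$, right$(G_1)$ to top$(G_3)$, and right$(G_2)$ to left$(G_3)$; its outmost vertices are top$(G_1)$, left$(G_2)$, right$(G_3)$. $H_{2,n}$ (resp. $H_{1,n}$, $H_{0,n}$) is the sum of the weights (with $G=\Sigma_n$) of the spanning subgraphs of $\Sigma_n$ in which the three outmost vertices lie in one component (resp. left and right outmost in one component, top in another; resp. the three in three distinct components). $\chi(G,\lambda)$ is the number of proper colorings of the vertices of $G$ with $\lambda$ colors. *)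

(* Defs.v *)
From HB Require Import structures.
From mathcomp Require Import all_boot all_order all_algebra.
Set Implicit Arguments. Unset Strict Implicit. Unset Printing Implicit Defensive.
Import Order.TTheory GRing.Theory Num.Theory.

(* The three vertex labels; copy 0 = G1, copy 1 = G2, copy 2 = G3.
   In Sigma_1 = K3: top = 0, left = 1, right = 2. *)
Definition o0 : 'I_3 := @Ordinal 3 0 isT.
Definition o1 : 'I_3 := @Ordinal 3 1 isT.
Definition o2 : 'I_3 := @Ordinal 3 2 isT.

(* Vertices of Sigma_n are words of length n over {0,1,2}; the first letter
   says which copy (G1,G2,G3) of Sigma_(n-1) the vertex lies in. *)
Definition sig_top (m : nat) : seq 'I_3 := nseq m o0.
Definition sig_left (m : nat) : seq 'I_3 := nseq m o1.
Definition sig_right (m : nat) : seq 'I_3 := nseq m o2.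

(* the three new edges of Sigma_(m+1) (one orientation):
   left(G1)-top(G2), right(G1)-top(G3), right(G2)-left(G3) *)
Definition bridge1 (m : nat) (a : 'I_3) (u : seq 'I_3) (b : 'I_3) (v : seq 'I_3) :=
  [|| [&& a == o0, u == sig_left m, b == o1 & v == sig_top m],
      [&& a == o0, u == sig_right m, b == o2 & v == sig_top m]
    | [&& a == o1, u == sig_right m, b == o2 & v == sig_left m]].

Definition bridge m a u b v := bridge1 m a u b v || bridge1 m b v a u.

Fixpoint sig_adj (u v : seq 'I_3) : bool :=
  match u, v with
  | [:: a], [:: b] => a != b
  | a :: u', b :: v' => ((a == b) && sig_adj u' v') || bridge (size u') a u' b v'
  | _, _ => false
  end.

Notation SV n := (n.-tuple 'I_3).
Definition Sadj (n : nat) : rel (SV n) := fun u v => sig_adj u v.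
Definition Sedges (n : nat) : {set {set SV n}} :=
  [set e : {set SV n} | [exists u : SV n, exists v : SV n, Sadj u v && (e == [set u; v])]].

Definition Stop (n : nat) : SV n := [tuple of nseq n o0].
Definition Sleft (n : nat) : SV n := [tuple of nseq n o1].
Definition Sright (n : nat) : SV n := [tuple of nseq n o2].

Definition sub_rel (T : finType) (A : {set {set T}}) : rel T :=
  fun x y => [set x; y] \in A.
Definition conn (T : finType) (A : {set {set T}}) : rel T := connect (sub_rel A).

Definition ncomp (T : finType) (A : {set {set T}}) : nat := n_comp (sub_rel A) T.
Definition rk (T : finType) (A : {set {set T}}) : nat := #|T| - ncomp A.
Definition nul (T : finType) (A : {set {set T}}) : nat := #|A| - rk A.
(* (these subtractions are never truncated: k(A) <= |V|, |A| >= r(A)) *)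

Local Open Scope ring_scope.

Definition weight (n : nat) (A : {set {set SV n}}) (x y : int) : int :=
  (x - 1) ^+ (rk (Sedges n) - rk A)%N * (y - 1) ^+ (nul A).

Definition cond2 n (A : {set {set SV n}}) : bool :=
  conn A (Stop n) (Sleft n) && conn A (Stop n) (Sright n).
Definition cond1 n (A : {set {set SV n}}) : bool :=
  conn A (Sleft n) (Sright n) && ~~ conn A (Stop n) (Sleft n).
Definition cond0 n (A : {set {set SV n}}) : bool :=
  [&& ~~ conn A (Stop n) (Sleft n), ~~ conn A (Stop n) (Sright n)
    & ~~ conn A (Sleft n) (Sright n)].

Definition H2 n (x y : int) : int :=
  \sum_(A in powerset (Sedges n) | cond2 A) weight A x y.
Definition H1 n (x y : int) : int :=
  \sum_(A in powerset (Sedges n) | cond1 A) weight A x y.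
Definition H0 n (x y : int) : int :=
  \sum_(A in powerset (Sedges n) | cond0 A) weight A x y.

Definition P2 n (l : int) : int := H2 n (1 - l) 0.
Definition P1 n (l : int) : int := H1 n (1 - l) 0.
Definition P0 n (l : int) : int := H0 n (1 - l) 0.
Definition Pn n (l : int) : int := P2 n l + 3 * P1 n l + P0 n l.

Definition chi (n : nat) (lam : nat) : nat :=
  #|[set f : {ffun SV n -> 'I_lam} | [forall u, forall v, Sadj u v ==> (f u != f v)]]|.

(* Main.v *)
Require Import Defs.
From HB Require Import structures.
From mathcomp Require Import all_boot all_order all_algebra.
From mathcomp Require Import zify ring.
Import Order.TTheory GRing.Theory Num.Theory.
Set Implicit Arguments. Unset Strict Implicit. Unset Printing Implicit Defensive.

Section Gen.
Variable T : finType.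
Implicit Types (A B : {set {set T}}) (x y u v : T).

Lemma sub_rel_sym A : symmetric (sub_rel A).
Proof. by move=> x y; rewrite /sub_rel setUC. Qed.

Lemma conn_sym A : connect_sym (sub_rel A).
Proof. exact/sym_connect_sym/sub_rel_sym. Qed.

Lemma pair_eq x y u v : [set x; y] = [set u; v] -> (x = u /\ y = v) \/ (x = v /\ y = u).
Proof.
move=> E.
have hx : x \in [set u; v] by rewrite -E !inE eqxx.
have hy : y \in [set u; v] by rewrite -E !inE eqxx orbT.
have hu : u \in [set x; y] by rewrite E !inE eqxx.
have hv : v \in [set x; y] by rewrite E !inE eqxx orbT.
move: hx hy hu hv; rewrite !inE.
do 4! (case/orP=> /eqP ?); subst; by [left | right].
Qed.

Lemma path_add (e e' : rel T) x y :
  connect_sym e ->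
  (forall u v, e' u v -> [|| e u v, (u == x) && (v == y) | (u == y) && (v == x)]) ->
  forall u v, connect e' u v ->
  connect e u v \/ ((connect e u x || connect e u y) /\ (connect e v x || connect e v y)).
Proof.
move=> sym hs u v /connectP[p pp ->] {v}.
elim: p u pp => [|w p IH] u /=; first by left.
case/andP=> euw /IH [cw | [Sw Sv]].
- case/or3P: (hs _ _ euw) => [e1 | /andP[/eqP-> /eqP ew] | /andP[/eqP-> /eqP ew]].
  + by left; apply: connect_trans (connect1 e1) cw.
  + right; split; first by rewrite connect0.
    by subst w; rewrite [connect e _ y]sym cw orbT.
  + right; split; first by rewrite connect0 orbT.
    by subst w; rewrite [connect e _ x]sym cw.
- right; split=> //.
  case/or3P: (hs _ _ euw) => [e1 | /andP[/eqP-> _] | /andP[/eqP-> _]].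
  + by case/orP: Sw => h; apply/orP; [left|right]; apply: connect_trans (connect1 e1) h.
  + by rewrite connect0.
  + by rewrite connect0 orbT.
Qed.

Lemma n_comp_add (e e' : rel T) x y :
  connect_sym e -> connect_sym e' -> (forall u v, e u v -> e' u v) ->
  (forall u v, e' u v -> [|| e u v, (u == x) && (v == y) | (u == y) && (v == x)]) ->
  (n_comp e T <= (n_comp e' T).+1)%N.
Proof.
move=> syme syme' sub hs.
pose D := [pred r | roots e r && (r != fingraph.root e y)].
have h1 : (n_comp e T <= #|D|.+1)%N.
  apply: (@leq_trans #|[predU1 fingraph.root e y & D]|).
    apply: subset_leq_card; apply/subsetP=> r; rewrite !inE /= => /andP[-> _].
    by case: eqP => // _; rewrite orbT.
  rewrite cardU1; by case: (_ \notin _).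
apply: (leq_trans h1); rewrite ltnS.
have key : forall r, fingraph.root e r = r -> r != fingraph.root e y ->
    (connect e r x || connect e r y) -> connect e r x.
  move=> r rr nr /orP[//|/(fingraph.rootP syme) ry].
  by move: nr; rewrite -ry rr eqxx.
have inj : {in D &, injective (fingraph.root e')}.
  move=> r1 r2 /andP[/eqP rr1 n1] /andP[/eqP rr2 n2] /(fingraph.rootP syme') c12.
  case: (path_add syme hs c12) => [c | [S1 S2]].
    by rewrite -rr1 -rr2; apply/(fingraph.rootP syme).
  have c1 := key _ rr1 n1 S1; have c2 := key _ rr2 n2 S2.
  rewrite -rr1 -rr2; apply/(fingraph.rootP syme).
  by apply: connect_trans c1 _; rewrite syme.
rewrite -(card_in_imset inj); apply: subset_leq_card; apply/subsetP=> r.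
by case/imsetP=> z _ ->; rewrite !inE /= roots_root.
Qed.

Lemma ncomp0 : ncomp (set0 : {set {set T}}) = #|T|.
Proof.
rewrite /ncomp /n_comp_mem; apply: eq_card => x; rewrite !inE andbT.
apply/eqP; have /connectP[p pp ->] := connect_root (sub_rel set0) x.
by case: p pp => //= z p; rewrite /sub_rel inE.
Qed.

Lemma ncomp_le A : (ncomp A <= #|T|)%N.
Proof. exact: max_card. Qed.

Lemma forest_bound A : (#|T| <= #|A| + ncomp A)%N.
Proof.
have [m] := ubnP #|A|; elim: m A => // m IH A.
have [->|/set0Pn[s sA]] := eqVneq A set0; first by rewrite ncomp0 cards0.
rewrite (cardsD1 s A) sA add1n ltnS => /IH hA'.
apply: (leq_trans hA'); rewrite addSn -addnS leq_add2l.
have [t _|T0] := pickP (@predT T); last first.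
  by apply: leq_trans (ncomp_le (A :\: [set s])) _; rewrite (eq_card0 T0).
rewrite /ncomp.
have sub : forall u v, sub_rel (A :\ s) u v -> sub_rel A u v.
  by move=> u v; rewrite /sub_rel !inE => /andP[].
have [/existsP[x /existsP[y /eqP sxy]]|nps] := boolP [exists x, exists y, s == [set x; y]].
  apply: (n_comp_add (x:=x) (y:=y) (conn_sym _) (conn_sym _) sub) => u v.
  rewrite /sub_rel !inE; case: eqP => [e1 _|_ /= ->] //=.
  rewrite sxy in e1; case: (pair_eq e1) => [[-> ->]|[-> ->]]; by rewrite !eqxx ?orbT.
apply: (n_comp_add (x:=t) (y:=t) (conn_sym _) (conn_sym _) sub) => u v.
rewrite /sub_rel !inE; case: eqP => [e1 _|_ /= ->] //=.
by move: nps; rewrite -e1; case/existsP; exists u; apply/existsP; exists v.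
Qed.

Lemma ncomp_gt0 A (t : T) : (0 < ncomp A)%N.
Proof.
apply/card_gt0P; exists (fingraph.root (sub_rel A) t).
by rewrite !inE andbT roots_root //; apply: conn_sym.
Qed.

End Gen.
Section Gen2.
Variable T : finType.

Lemma connect_const (e : rel T) (R : eqType) (f : T -> R) :
  (forall x y, e x y -> f x = f y) -> forall x y, connect e x y -> f x = f y.
Proof.
move=> h x _ /connectP[p pp ->]; elim: p x pp => //= z p IH x /andP[exz /IH <-].
exact: h.
Qed.

Lemma count_const (R : finType) (e : rel T) : connect_sym e ->
  #|[set f : {ffun T -> R} | [forall x, forall y, e x y ==> (f x == f y)]]| = (#|R| ^ n_comp e T)%N.
Proof.
move=> sym.
pose K := [set f : {ffun T -> R} | [forall x, forall y, e x y ==> (f x == f y)]].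
pose S := {x : T | roots e x}.
pose phi (f : {ffun T -> R}) : {ffun S -> R} := [ffun r => f (val r)].
have Kroot : forall f, f \in K -> forall x, f x = f (fingraph.root e x).
  move=> f; rewrite inE => /forallP h x; apply: (connect_const (e:=e)).
    by move=> a b eab; apply/eqP; move: (h a) => /forallP/(_ b); rewrite eab.
  exact: connect_root.
have inj : {in K &, injective phi}.
  move=> f g fK gK E; apply/ffunP=> x; rewrite (Kroot _ fK) (Kroot _ gK).
  have rr : roots e (fingraph.root e x) by apply: roots_root.
  by move: E => /ffunP/(_ (@exist T (roots e) _ rr)); rewrite /phi !ffunE.
rewrite -(card_in_imset inj).
have -> : phi @: K = setT.
  apply/eqP; rewrite eqEsubset subsetT /=; apply/subsetP=> g _.
  have rr : forall x, roots e (fingraph.root e x) by move=> x; apply: roots_root.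
  pose f := [ffun x => g (@exist T (roots e) _ (rr x))].
  apply/imsetP; exists f.
    rewrite inE; apply/forallP=> x; apply/forallP=> y; apply/implyP=> exy.
    rewrite !ffunE; apply/eqP; apply: f_equal; apply: val_inj => /=.
    by apply/(fingraph.rootP sym)/connect1.
  apply/ffunP=> r; rewrite /phi !ffunE; apply: f_equal; apply: val_inj => /=.
  by case: r => r /= /eqP.
rewrite cardsT card_ffun card_sig; congr (_ ^ _).
by apply: eq_card => x; rewrite !inE andbT.
Qed.

Definition Eset (adj : rel T) : {set {set T}} :=
  [set s | [exists u, exists v, adj u v && (s == [set u; v])]].
Definition mono (R : eqType) (f : T -> R) (s : {set T}) :=
  [forall u, forall v, (u \in s) ==> (v \in s) ==> (f u == f v)].

Lemma Eset_pair adj s : s \in Eset adj -> exists u v, adj u v /\ s = [set u; v].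
Proof. by rewrite inE => /existsP[u /existsP[v /andP[a /eqP ->]]]; exists u, v. Qed.

Lemma allmono_iff adj (J : {set {set T}}) (R : eqType) (f : T -> R) :
  J \subset Eset adj ->
  [forall s in J, mono f s] = [forall x, forall y, sub_rel J x y ==> (f x == f y)].
Proof.
move=> /subsetP JE; apply/forallP/forallP => [h x|h s].
  apply/forallP=> y; apply/implyP=> sJ; have sJ' : [set x; y] \in J := sJ.
  by move: (h [set x; y]); rewrite sJ' /= => /forallP/(_ x)/forallP/(_ y); rewrite !inE !eqxx ?orbT.
apply/implyP=> sJ; have [a [b [_ sab]]] := Eset_pair (JE _ sJ).
have fab : f a == f b by move: (h a) => /forallP/(_ b); rewrite /sub_rel -sab sJ.
apply/forallP=> u; apply/forallP=> v; rewrite sab !inE.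
by apply/implyP=> /orP[/eqP->|/eqP->]; apply/implyP=> /orP[/eqP->|/eqP->]; rewrite ?eqxx // eq_sym.
Qed.

Lemma proper_eq adj (R : eqType) (f : T -> R) :
  [forall u, forall v, adj u v ==> (f u != f v)] =
  [forall s, ~~ ((s \in Eset adj) && mono f s)].
Proof.
apply/forallP/forallP => [h s|h u].
  apply/negP=> /andP[/Eset_pair[u [v [auv ->]]] /forallP/(_ u)/forallP/(_ v)].
  rewrite !inE !eqxx orbT /= => fuv.
  by move: (h u) => /forallP/(_ v); rewrite auv fuv.
apply/forallP=> v; apply/implyP=> auv; apply/negP=> fuv.
move: (h [set u; v]); rewrite negb_and; case/orP => /negP; apply.
  by rewrite inE; apply/existsP; exists u; apply/existsP; exists v; rewrite auv eqxx.
apply/forallP=> a; apply/forallP=> b; rewrite !inE.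
by apply/implyP=> /orP[/eqP->|/eqP->]; apply/implyP=> /orP[/eqP->|/eqP->]; rewrite ?eqxx // eq_sym.
Qed.

Local Open Scope ring_scope.

Lemma indicator_expand adj (lam : nat) (f : {ffun T -> 'I_lam}) :
  (if [forall u, forall v, adj u v ==> (f u != f v)] then 1 else 0 : int) =
  \sum_(J in powerset (Eset adj))
     (if [forall s in J, mono f s] then (-1) ^+ #|J| else 0).
Proof.
pose F s : int := if (s \in Eset adj) && mono f s then -1 else 0.
have A1 : \prod_(s : {set T}) (F s + 1) =
    (if [forall u, forall v, adj u v ==> (f u != f v)] then 1 else 0).
  rewrite proper_eq; case: (boolP [forall s, _]) => [/forallP h|].
    by apply: big1 => s _; rewrite /F (negbTE (h s)) add0r.
  rewrite negb_forall => /existsP[s]; rewrite negbK => hs; by rewrite (bigD1 s) //= /F hs addNr mul0r.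
rewrite -A1 (@bigA_distr int 0 1 *%R +%R _ (fun s => F s) (fun _ => 1)).
rewrite (big_mkcond (fun J => J \in powerset _)) /=; apply: eq_bigr => J _.
rewrite -big_mkcond /= inE.
case: (boolP (J \subset Eset adj)) => [JE|nJE] /=.
  case: (boolP [forall s in J, _]) => [/forallP h|].
    rewrite -prodr_const; apply: eq_bigr => s sJ.
    by rewrite /F (subsetP JE _ sJ); move: (h s); rewrite sJ /= => ->.
  rewrite negb_forall => /existsP[s]; rewrite negb_imply => /andP[sJ ns].
  by rewrite (bigD1 s) //= /F (negbTE ns) andbF mul0r.
have [s sJ ns] : exists2 s, (s \in J) & (s \notin Eset adj).
  by apply/exists_inP; rewrite -negb_forall_in; apply: contra nJE => /forall_inP h; apply/subsetP.
by rewrite (bigD1 s) //= /F (negbTE ns) mul0r.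
Qed.

Lemma chrom_expand adj (lam : nat) :
  (#|[set f : {ffun T -> 'I_lam} | [forall u, forall v, adj u v ==> (f u != f v)]]|)%:Z =
  \sum_(J in powerset (Eset adj)) (-1) ^+ #|J| * lam%:Z ^+ ncomp J.
Proof.
rewrite -natz -sum1_card natr_sum big_mkcond /=.
under eq_bigr => f _ do rewrite inE indicator_expand.
rewrite exchange_big /=; apply: eq_bigr => J; rewrite inE => JE.
rewrite -big_mkcond /= sumr_const -mulr_natr; congr (_ * _).
transitivity ((#|[set f : {ffun T -> 'I_lam} | [forall x, forall y, sub_rel J x y ==> (f x == f y)]]|)%:R : int).
  congr (_%:R); apply: eq_card => f; rewrite !inE -(allmono_iff _ JE); reflexivity.
rewrite (count_const _ (conn_sym J)) -natz -natrX card_ord.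
by [].
Qed.

End Gen2.

Section Map.
Variable T : finType.
Variable h : T -> T.
Hypothesis injh : injective h.

Definition mapA (A : {set {set T}}) : {set {set T}} := [set h @: (s : {set T}) | s in A].

Lemma imset_pair x y : h @: [set x; y] = [set h x; h y].
Proof. by rewrite imsetU1 imset_set1. Qed.

Lemma mapA_inj : injective mapA.
Proof. exact: imset_inj (imset_inj injh). Qed.

Lemma sub_rel_map A x y : sub_rel (mapA A) (h x) (h y) = sub_rel A x y.
Proof. by rewrite /sub_rel -imset_pair mem_imset //; apply: imset_inj. Qed.

Lemma adj_map A : rel_adjunction h (sub_rel (mapA A)) (sub_rel A) predT.
Proof.
apply: strict_adjunction.
- exact: conn_sym.
- by move=> x y _; rewrite !inE.
- exact: injh.
- by apply/subsetP=> y _; apply: inj_card_onto.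
- by move=> x y _; rewrite sub_rel_map.
Qed.

Lemma conn_map A x y : conn (mapA A) (h x) (h y) = conn A x y.
Proof. by rewrite /conn (rel_functor (adj_map A)). Qed.

Lemma ncomp_map A : ncomp (mapA A) = ncomp A.
Proof.
rewrite /ncomp (adjunction_n_comp h (conn_sym _) (conn_sym _) _ (adj_map A)).
  by apply: eq_n_comp_r => x; rewrite !inE.
by move=> x y _; rewrite !inE.
Qed.

Lemma card_map A : #|mapA A| = #|A|.
Proof. by rewrite card_imset //; apply: imset_inj. Qed.

End Map.

Definition rot3 (i : 'I_3) : 'I_3 := if i == o0 then o1 else if i == o1 then o2 else o0.

Lemma rot3K3 i : rot3 (rot3 (rot3 i)) = i.
Proof. by apply: val_inj; case: i => [[|[|[|k]]] Hi]. Qed.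

Lemma rot3_inj : injective rot3.
Proof. exact: (can_inj (g := fun i => rot3 (rot3 i))) rot3K3. Qed.

Lemma map_rot_nseq m i : map rot3 (nseq m i) = nseq m (rot3 i).
Proof. by rewrite map_nseq. Qed.

Lemma rot_eq_nseq m (u : seq 'I_3) i : (map rot3 u == nseq m (rot3 i)) = (u == nseq m i).
Proof. by rewrite -map_rot_nseq (inj_eq (inj_map rot3_inj)). Qed.

Lemma rot_eq_nseq' m (u : seq 'I_3) j : (map rot3 u == nseq m j) = (u == nseq m (rot3 (rot3 j))).
Proof. by rewrite -rot_eq_nseq rot3K3. Qed.

Lemma bridge_rot m a u b v :
  bridge m (rot3 a) (map rot3 u) (rot3 b) (map rot3 v) = bridge m a u b v.
Proof.
rewrite /bridge /bridge1 /sig_left /sig_right /sig_top !rot_eq_nseq'.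
have r0 : rot3 (rot3 o0) = o2 by [].
have r1 : rot3 (rot3 o1) = o0 by [].
have r2 : rot3 (rot3 o2) = o1 by [].
rewrite r0 r1 r2.
case: a => [[|[|[|k]]] Ha] //; case: b => [[|[|[|l]]] Hb] //=;
  rewrite ?andbF ?orbF ?orFb //; by rewrite andbC.
Qed.

Lemma sig_adj_cons a u b v : (u != [::]) || (v != [::]) ->
  sig_adj (a :: u) (b :: v) = ((a == b) && sig_adj u v) || bridge (size u) a u b v.
Proof. by case: u => [|x u]; case: v => [|y v]. Qed.

Lemma sig_adj_rot u v : sig_adj (map rot3 u) (map rot3 v) = sig_adj u v.
Proof.
elim: u v => [|a u IH] [|b v] //; first by case: u {IH}.
have [/andP[/eqP-> /eqP->]|nn] := boolP ((u == [::]) && (v == [::])).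
  by rewrite /= (inj_eq rot3_inj).
have nn' : (u != [::]) || (v != [::]) by rewrite -negb_and.
have nn'' : (map rot3 u != [::]) || (map rot3 v != [::]).
  by move: nn'; case: u {IH nn}; case: v.
rewrite map_cons map_cons (sig_adj_cons _ _ nn'') (sig_adj_cons _ _ nn').
by rewrite (inj_eq rot3_inj) IH size_map bridge_rot.
Qed.

Lemma bridge_size m a u b v : bridge m a u b v -> size u = m /\ size v = m.
Proof.
rewrite /bridge /bridge1 /sig_left /sig_right /sig_top.
by do ![case/orP | case/and4P=> _ /eqP-> _ /eqP->]; rewrite !size_nseq.
Qed.

Lemma bridge_sizeE a u b v : bridge (size u) a u b v = bridge (size v) a u b v.
Proof.
have [->//|ne] := eqVneq (size u) (size v).
apply/idP/idP => /bridge_size [h1 h2]; move: ne; by rewrite ?h1 ?h2 eqxx.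
Qed.

Lemma bridge_sym m a u b v : bridge m a u b v = bridge m b v a u.
Proof. by rewrite /bridge orbC. Qed.

Lemma sig_adj_sym u v : sig_adj u v = sig_adj v u.
Proof.
elim: u v => [|a u IH] [|b v] //; [by case: v | by case: u {IH} |].
have [/andP[/eqP-> /eqP->]|nn] := boolP ((u == [::]) && (v == [::])).
  by rewrite /= eq_sym.
have nn' : (u != [::]) || (v != [::]) by rewrite -negb_and.
have nn2 : (v != [::]) || (u != [::]) by rewrite orbC.
rewrite (sig_adj_cons _ _ nn') (sig_adj_cons _ _ nn2) eq_sym IH.
by rewrite bridge_sym bridge_sizeE.
Qed.

Definition sigm n (t : SV n) : SV n := [tuple of map rot3 t].

Lemma sigm_inj n : injective (@sigm n).
Proof. by move=> t t' /(congr1 val) /= /(inj_map rot3_inj) E; apply: val_inj. Qed.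

Lemma Sadj_sigm n (x y : SV n) : Sadj (sigm x) (sigm y) = Sadj x y.
Proof. exact: sig_adj_rot. Qed.

Lemma sigm_top n : sigm (Stop n) = Sleft n.
Proof. by apply: val_inj; rewrite /= map_nseq. Qed.
Lemma sigm_left n : sigm (Sleft n) = Sright n.
Proof. by apply: val_inj; rewrite /= map_nseq. Qed.
Lemma sigm_right n : sigm (Sright n) = Stop n.
Proof. by apply: val_inj; rewrite /= map_nseq. Qed.

Lemma Sedges_E n : Sedges n = Eset (@Sadj n).
Proof. by []. Qed.

Lemma mapA_Sedges n : mapA (@sigm n) (Sedges n) = Sedges n.
Proof.
apply/eqP; rewrite eqEcard card_map ?leqnn ?andbT; last exact: sigm_inj.
apply/subsetP=> s' /imsetP[s /Eset_pair[u [v [auv ->]]] ->].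
rewrite imset_pair inE; apply/existsP; exists (sigm u); apply/existsP; exists (sigm v).
by rewrite Sadj_sigm auv eqxx.
Qed.

Lemma pow_map n (B : {set {set SV n}}) :
  (mapA (@sigm n) B \in powerset (Sedges n)) = (B \in powerset (Sedges n)).
Proof.
rewrite !inE; apply/idP/idP => sub.
  apply/subsetP=> s sB.
  have : (@sigm n) @: s \in Sedges n.
    by apply: (subsetP sub); apply/imsetP; exists s.
  rewrite -{1}mapA_Sedges mem_imset //; apply: imset_inj; exact: sigm_inj.
by rewrite -mapA_Sedges; apply: imsetS.
Qed.

Lemma connect_map (T T' : finType) (f : T -> T') (e : rel T) (e' : rel T') :
  (forall x y, e x y -> e' (f x) (f y)) -> forall x y, connect e x y -> connect e' (f x) (f y).
Proof.
move=> h x _ /connectP[p pp ->]; elim: p x pp => //= z p IH x /andP[exz /IH].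
exact: connect_trans (connect1 (h _ _ exz)).
Qed.

Lemma sub_rel_Sedges n (x y : SV n) : sub_rel (Sedges n) x y = Sadj x y.
Proof.
apply/idP/idP => [/Eset_pair[u [v [auv E]]]|axy].
  by case: (pair_eq E) => [[-> ->]|[-> ->]] //; rewrite /Sadj sig_adj_sym.
by rewrite /sub_rel inE; apply/existsP; exists x; apply/existsP; exists y; rewrite axy eqxx.
Qed.

Lemma conn_Sedges n (x y : SV n) : conn (Sedges n) x y = connect (@Sadj n) x y.
Proof. by apply: eq_connect => a b; rewrite sub_rel_Sedges. Qed.

Definition tcons n (a : 'I_3) (x : SV n) : SV n.+1 := [tuple of a :: x].

Lemma Sadj_tcons n a (x y : SV n.+1) : Sadj x y -> Sadj (tcons a x) (tcons a y).
Proof.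
rewrite /Sadj /tcons /=; case: x => [[|b x'] Hx] //= axy.
by rewrite eqxx axy.
Qed.

Lemma Sconnected n (t : SV n.+1) : connect (@Sadj n.+1) t (Stop n.+1).
Proof.
elim: n t => [|n IH] t.
  case/tupleP: t => a t0; rewrite tuple0.
  have [ea|na] := eqVneq a o0.
    by rewrite ea; apply: eq_connect0; apply: val_inj.
  by apply: connect1; rewrite /Sadj /= na.
case/tupleP: t => a t'.
have lift : forall b (x y : SV n.+1), connect (@Sadj n.+1) x y ->
    connect (@Sadj n.+2) (tcons b x) (tcons b y).
  by move=> b; apply: connect_map => x y; apply: Sadj_tcons.
apply: connect_trans (lift a _ _ (IH t')) _.
have Etop : tcons o0 (Stop n.+1) = Stop n.+2 by apply: val_inj.
case: a => [[|[|[|k]]] Ha] //.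
- by rewrite -Etop (_ : Ordinal Ha = o0) //; apply: val_inj.
- apply: (@connect_trans _ _ (tcons o0 (Sleft n.+1))).
    apply: connect1; rewrite /Sadj /=.
    by rewrite size_nseq /bridge /bridge1 /sig_top /sig_left /sig_right /= !eqxx ?orbT.
  by rewrite -Etop; apply: lift.
- apply: (@connect_trans _ _ (tcons o0 (Sright n.+1))).
    apply: connect1; rewrite /Sadj /=.
    by rewrite size_nseq /bridge /bridge1 /sig_top /sig_left /sig_right /= !eqxx ?orbT.
  by rewrite -Etop; apply: lift.
Qed.

Lemma ncomp_Sedges n : ncomp (Sedges n.+1) = 1%N.
Proof.
rewrite /ncomp.
transitivity (n_comp (sub_rel (Sedges n.+1)) (connect (sub_rel (Sedges n.+1)) (Stop n.+1))).
  2: exact: (n_comp_connect (conn_sym (Sedges n.+1))).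
apply: eq_n_comp_r => x; rewrite !inE.
by rewrite (conn_sym (Sedges n.+1)) /= -/(conn _ _ _) conn_Sedges Sconnected.
Qed.

Section Split.
Variable n : nat.
Local Notation E := (Sedges n).
Local Notation tp := (Stop n).
Local Notation lf := (Sleft n).
Local Notation rt := (Sright n).
Local Notation sg := (@sigm n).
Local Open Scope ring_scope.

Lemma connT (A : {set {set SV n}}) x y z : conn A x y -> conn A y z -> conn A x z.
Proof. exact: connect_trans. Qed.
Lemma connS (A : {set {set SV n}}) x y : conn A x y = conn A y x.
Proof. exact: conn_sym. Qed.

Lemma weight_map (B : {set {set SV n}}) x y : weight (mapA sg B) x y = weight B x y.
Proof. by rewrite /weight /nul /rk ncomp_map ?card_map //; exact: sigm_inj. Qed.

Lemma reindex_sg (Q : {set {set SV n}} -> bool) x y :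
  \sum_(A in powerset E | Q A) weight A x y =
  \sum_(A in powerset E | Q (mapA sg A)) weight A x y.
Proof.
rewrite (reindex_inj (mapA_inj (@sigm_inj n))) /=.
by apply: eq_big => [B|B _]; rewrite ?pow_map ?weight_map.
Qed.

Lemma conn_sg (A : {set {set SV n}}) u v : conn (mapA sg A) (sg u) (sg v) = conn A u v.
Proof. apply: conn_map; exact: sigm_inj. Qed.

Lemma sum_split x y :
  \sum_(A in powerset E) weight A x y = H2 n x y + 3 * H1 n x y + H0 n x y.
Proof.
rewrite (bigID (fun A => conn A tp lf)) /=.
rewrite (bigID (fun A => conn A tp rt)) /=.
rewrite [X in _ + X](bigID (fun A => conn A tp rt)) /=.
rewrite [X in _ + (_ + X)](bigID (fun A => conn A lf rt)) /=.
have tr : forall A, [&& (conn A tp rt && conn A lf rt) ==> conn A tp lf,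
    (conn A tp lf && conn A lf rt) ==> conn A tp rt &
    (conn A tp lf && conn A tp rt) ==> conn A lf rt].
  move=> A; apply/and3P; split; apply/implyP=> /andP[h1 h2].
  - by apply: connT h1 _; rewrite connS.
  - exact: connT h1 h2.
  - by apply: connT _ h2; rewrite connS.
have c1 : forall A, conn (mapA sg A) tp lf = conn A tp rt.
  by move=> A; have := conn_sg A rt tp; rewrite sigm_right sigm_top connS.
have c2 : forall A, conn (mapA sg A) tp rt = conn A lf rt.
  by move=> A; have := conn_sg A rt lf; rewrite sigm_right sigm_left connS.
have c3 : forall A, conn (mapA sg A) lf rt = conn A tp lf.
  by move=> A; have := conn_sg A tp lf; rewrite sigm_top sigm_left.
have -> : \sum_(i | (i \in powerset E) && conn i tp lf && conn i tp rt) weight i x y = H2 n x y.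
  by apply: eq_bigl => A; rewrite /cond2 andbA.
have -> : \sum_(i | (i \in powerset E) && ~~ conn i tp lf && ~~ conn i tp rt && ~~ conn i lf rt)
     weight i x y = H0 n x y.
  by apply: eq_bigl => A; rewrite /cond0 !andbA.
have -> : \sum_(i | (i \in powerset E) && ~~ conn i tp lf && ~~ conn i tp rt && conn i lf rt)
     weight i x y = H1 n x y.
  apply: eq_bigl => A; rewrite /cond1 -!andbA; congr (_ && _).
  by move: (tr A); case: (conn A tp lf); case: (conn A tp rt); case: (conn A lf rt).
have -> : \sum_(i | (i \in powerset E) && ~~ conn i tp lf && conn i tp rt) weight i x y = H1 n x y.
  rewrite (eq_bigl (fun A => (A \in powerset E) && (~~ conn A tp lf && conn A tp rt))); last first.
    by move=> A; rewrite andbA.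
  rewrite reindex_sg; apply: eq_bigl => A; rewrite c1 c2 /cond1; congr (_ && _).
  by move: (tr A); case: (conn A tp lf); case: (conn A tp rt); case: (conn A lf rt).
have -> : \sum_(i | (i \in powerset E) && conn i tp lf && ~~ conn i tp rt) weight i x y = H1 n x y.
  rewrite (eq_bigl (fun A => (A \in powerset E) && (conn A tp lf && ~~ conn A tp rt))); last first.
    by move=> A; rewrite andbA.
  by rewrite reindex_sg reindex_sg; apply: eq_bigl => A; rewrite !c1 !c2 !c3 /cond1.
ring.
Qed.


End Split.

Local Open Scope ring_scope.

Lemma alg_id (N k a : nat) (l : int) : (1 <= k)%N -> (k <= N)%N -> (N <= a + k)%N ->
  (-1) ^+ a * l ^+ k =
  (-1) ^+ (N - 1)%N * l * ((1 - l - 1) ^+ ((N - 1) - (N - k))%N * (0 - 1) ^+ (a - (N - k))%N).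
Proof.
case: k => [//|k] _ hk hN.
have -> : ((N - 1) - (N - k.+1))%N = k by lia.
have -> : 1 - l - 1 = - l by ring.
rewrite sub0r.
have E : (-1 : int) ^+ a = (-1) ^+ (N - 1)%N * (-1) ^+ k * (-1) ^+ (a - (N - k.+1))%N.
  rewrite -!exprD.
  have -> : ((N - 1) + k + (a - (N - k.+1)))%N = (a + k.*2)%N by lia.
  by rewrite exprD -mul2n exprM sqrrN !expr1n mulr1.
rewrite E exprS (exprNn l); ring.
Qed.

Unset Implicit Arguments.

Theorem proposition4p12 (n : nat) (hn : (1 <= n)%N) (lam : nat) :
  (chi n lam)%:Z = (-1) ^+ (3 ^ n - 1)%N * lam%:Z * Pn n lam%:Z.
Proof.
case: n hn => [//|m] _.
rewrite /chi chrom_expand -Sedges_E.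
rewrite /Pn /P2 /P1 /P0 -sum_split mulr_sumr.
apply: eq_bigr => A AE.
have cardT : #|{: SV m.+1}| = (3 ^ m.+1)%N by rewrite card_tuple card_ord.
rewrite /weight /nul /rk ncomp_Sedges cardT.
apply: alg_id.
- exact: ncomp_gt0 (Stop m.+1).
- by rewrite -cardT; apply: ncomp_le.
- by rewrite -cardT; apply: forest_bound.
Qed.
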